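(* Let $\delta>0$. For UCBVI-CH run for $K$ episodes, with probability at least $1-\delta$, simultaneously for all $k\in[K]$, $h\in[H+1]$ and $x\in\mathcal S$, one has $V_{k,h}(x)\ge V^*_h(x)$.
   Context: Setting: a finite-horizon episodic MDP with finite state set $\mathcal S$ ($|\mathcal S|=S$), finite action set $\mathcal A$ ($|\mathcal A|=A$), unknown transitions $P(\cdot\mid x,a)$, known deterministic reward $R:\mathcal S\times\mathcal A\to[0,1]$, horizon $H$; episodes $k=1,\dots,K$ start from arbitrary $x_{k,1}$ and $x_{k,h+1}\sim P(\cdot\mid x_{k,h},a_{k,h})$. $V^*_h(x)=\sup_\pi\mathbb E\big[\sum_{j=h}^HR(x_j,\pi(x_j,j))\mid x_h=x\big]$, $V^*_{H+1}\equiv0$; $T=KH$. UCBVI: before episode $k$, from transitions of episodes $i<k$, $N_k(x,a,y)$ counts transitions $(x,a)\to y$, $N_k(x,a)=\sum_yN_k(x,a,y)$, $\widehat P_k(y\mid x,a)=N_k(x,a,y)/N_k(x,a)$ if $N_k(x,a)>0$. $V_{k,H+1}\equiv0$, $Q_{0,h}\equiv H$; for $h=H,\dots,1$: if $N_k(x,a)>0$, $Q_{k,h}(x,a)=\min\big(Q_{k-1,h}(x,a),H,R(x,a)+\sum_y\widehat P_k(y\mid x,a)V_{k,h+1}(y)+b_{k,h}(x,a)\big)$, else $Q_{k,h}(x,a)=H$; $V_{k,h}(x)=\max_aQ_{k,h}(x,a)$; actions are chosen greedily w.r.t. $Q_{k,h}$. UCBVI-CH uses $b_{k,h}(x,a)=7HL'/\sqrt{N_k(x,a)}$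 with $L'=\ln(5SAT/\delta)$. *)

(* Defs.v *)
From Stdlib Require Import Reals List Arith ClassicalEpsilon.
Import ListNotations.
Open Scope R_scope.

(* States are 0..nS-1, actions 0..nA-1, steps h are 1..nH (1-indexed),
   episodes k are 1..nK (1-indexed). *)

Definition sumR (n : nat) (f : nat -> R) : R :=
  fold_right (fun i acc => f i + acc) 0 (seq 0 n).

(* maximum of f over 0..n-1 (used with n >= 1) *)
Definition maxR (n : nat) (f : nat -> R) : R :=
  fold_right (fun i acc => Rmax (f i) acc) (f 0%nat) (seq 0 n).

(* a transition (x, a, y) *)
Definition trans := (nat * nat * nat)%type.
Definition episode := list trans.

Definition ind (P : Prop) : R :=
  if excluded_middle_informative P then 1 else 0.

Section UCBVI.
Variables (nS nA nH nK : nat) (Rw : nat -> nat -> R) (delta : R).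

Definition cnt3 (hist : list trans) (x a y : nat) : nat :=
  length (filter (fun t => match t with (x', a', y') =>
            Nat.eqb x' x && Nat.eqb a' a && Nat.eqb y' y end)%bool hist).

Definition Nxa (hist : list trans) (x a : nat) : nat :=
  fold_right (fun y acc => (cnt3 hist x a y + acc)%nat) 0%nat (seq 0 nS).

Definition Phat (hist : list trans) (x a y : nat) : R :=
  INR (cnt3 hist x a y) / INR (Nxa hist x a).

Definition Ttot : R := INR (nK * nH).
Definition Lp : R := ln (5 * INR nS * INR nA * Ttot / delta).

Definition bonus (hist : list trans) (x a : nat) : R :=
  7 * INR nH * Lp / sqrt (INR (Nxa hist x a)).

(* Q_{k,h}(x,a) given the data hist of episodes < k, Q_{k-1,.} = Qprev and
   V_{k,h+1} = Vnext *)
Definition Qcore (hist : list trans) (Qprev : nat -> nat -> nat -> R)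
    (h : nat) (Vnext : nat -> R) (x a : nat) : R :=
  if Nat.ltb 0 (Nxa hist x a) then
    Rmin (Qprev h x a)
      (Rmin (INR nH)
         (Rw x a + sumR nS (fun y => Phat hist x a y * Vnext y) + bonus hist x a))
  else INR nH.

(* Vback m = V_{k, H+1-m} *)
Fixpoint Vback (hist : list trans) (Qprev : nat -> nat -> nat -> R) (m : nat)
    : nat -> R :=
  match m with
  | O => fun _ => 0
  | S m' => fun x =>
      maxR nA (fun a => Qcore hist Qprev (nH - m') (Vback hist Qprev m') x a)
  end.

Definition Qlev hist Qprev (h x a : nat) : R :=
  Qcore hist Qprev h (Vback hist Qprev (nH - h)) x a.
Definition Vlev hist Qprev (h x : nat) : R :=
  Vback hist Qprev (nH + 1 - h) x.

(* Q_{k,h}(x,a), computed from the first k-1 episodes of eps; Q_{0,h} = H *)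
Fixpoint Qk (eps : list episode) (k : nat) : nat -> nat -> nat -> R :=
  match k with
  | O => fun _ _ _ => INR nH
  | S k' => Qlev (concat (firstn k' eps)) (Qk eps k')
  end.

(* V_{k,h}(x), for k >= 1 *)
Definition Vk (eps : list episode) (k h x : nat) : R :=
  match k with
  | O => 0
  | S k' => Vlev (concat (firstn k' eps)) (Qk eps k') h x
  end.

(* the action selection rule is greedy w.r.t. Q_{k,h} (arbitrary tie-breaking);
   pick k h x eps, where eps are the data of the previous episodes *)
Definition greedy (pick : nat -> nat -> nat -> list episode -> nat) : Prop :=
  forall k h x eps, (1 <= k)%nat -> (1 <= h <= nH)%nat -> (x < nS)%nat ->
    (pick k h x eps < nA)%nat /\ Qk eps k h x (pick k h x eps) = Vk eps k h x.

End UCBVI.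

Section MDP.
Variables (nS nA nH : nat) (P : nat -> nat -> nat -> R) (Rw : nat -> nat -> R).

(* value of a deterministic Markov policy pi(x, j):  Vpi_back m = V^pi_{H+1-m} *)
Fixpoint Vpi_back (pi : nat -> nat -> nat) (m : nat) : nat -> R :=
  match m with
  | O => fun _ => 0
  | S m' => fun x =>
      let a := pi x (nH - m')%nat in
      Rw x a + sumR nS (fun y => P x a y * Vpi_back pi m' y)
  end.

(* V^pi_h(x) = E[ sum_{j=h}^H R(x_j, pi(x_j, j)) | x_h = x ] *)
Definition Vpi (pi : nat -> nat -> nat) (h x : nat) : R :=
  Vpi_back pi (nH + 1 - h) x.

Definition valid_policy (pi : nat -> nat -> nat) : Prop :=
  forall x j, (x < nS)%nat -> (pi x j < nA)%nat.

(* V*_h(x) >= ... : value dominates the sup over policies *)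
Definition dominates_opt (V : R) (h x : nat) : Prop :=
  forall pi, valid_policy pi -> V >= Vpi pi h x.
End MDP.

Fixpoint all_seqs (n m : nat) : list (list nat) :=
  match n with
  | O => [ [] ]
  | S n' => flat_map (fun y => map (cons y) (all_seqs n' m)) (seq 0 m)
  end.

(* all outcomes for k episodes: the next states y_{k,1..H} of each episode *)
Fixpoint all_outcomes (k nH nS : nat) : list (list (list nat)) :=
  match k with
  | O => [ [] ]
  | S k' => flat_map (fun ys => map (cons ys) (all_outcomes k' nH nS))
                     (all_seqs nH nS)
  end.

Section Run.
Variables (P : nat -> nat -> nat -> R)
          (start : nat -> list episode -> nat)
          (pick : nat -> nat -> nat -> list episode -> nat).

(* run episode k from step h at state x; ys = next states drawn;
   returns the transitions and the probability factor *)
Fixpoint run_ep (k h x : nat) (eps : list episode) (ys : list nat)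
    : episode * R :=
  match ys with
  | [] => ([], 1)
  | y :: ys' =>
      let a := pick k h x eps in
      let '(tr, p) := run_ep k (S h) y eps ys' in
      ((x, a, y) :: tr, P x a y * p)
  end.

(* run episodes k, k+1, ... ; start state chosen (possibly adaptively) by start *)
Fixpoint run (k : nat) (eps : list episode) (om : list (list nat))
    : list episode * R :=
  match om with
  | [] => (eps, 1)
  | ys :: om' =>
      let '(tr, p) := run_ep k 1 (start k eps) eps ys in
      let '(e, q) := run (S k) (eps ++ [tr]) om' in
      (e, p * q)
  end.
End Run.

Definition optimism (nS nA nH nK : nat) (P : nat -> nat -> nat -> R)
    (Rw : nat -> nat -> R) (delta : R) (eps : list episode) : Prop :=
  forall k h x, (1 <= k <= nK)%nat -> (1 <= h <= nH + 1)%nat -> (x < nS)%nat ->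
    dominates_opt nS nA nH P Rw (Vk nS nA nH nK Rw delta eps k h x) h x.

Definition prob_optimism (nS nA nH nK : nat) (P : nat -> nat -> nat -> R)
    (Rw : nat -> nat -> R) (delta : R)
    (start : nat -> list episode -> nat)
    (pick : nat -> nat -> nat -> list episode -> nat) : R :=
  fold_right (fun om acc =>
      let '(eps, p) := run P start pick 1 [] om in
      p * ind (optimism nS nA nH nK P Rw delta eps) + acc)
    0 (all_outcomes nK nH nS).

(* Main.v *)
Require Import Defs.
From Stdlib Require Import Reals List Arith Lia Lra Psatz Classical ClassicalEpsilon.
Import ListNotations.
Open Scope R_scope.

Definition lsum {A} (l : list A) (f : A -> R) : R :=
  fold_right (fun a acc => f a + acc) 0 l.
Arguments lsum {A} l f : simpl never.

Lemma lsum_nil {A} (f : A -> R) : lsum [] f = 0.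
Proof. reflexivity. Qed.
Lemma lsum_cons {A} a (l : list A) f : lsum (a :: l) f = f a + lsum l f.
Proof. reflexivity. Qed.

Lemma lsum_app {A} (l1 l2 : list A) f : lsum (l1 ++ l2) f = lsum l1 f + lsum l2 f.
Proof. induction l1; simpl app; rewrite ?lsum_cons, ?lsum_nil; [lra|]. rewrite IHl1. lra. Qed.

Lemma lsum_ext {A} (l : list A) f g : (forall a, In a l -> f a = g a) -> lsum l f = lsum l g.
Proof.
  induction l; intros H; auto.
  rewrite !lsum_cons, H by (left; auto). rewrite IHl; auto. intros; apply H; right; auto.
Qed.

Lemma lsum_le {A} (l : list A) f g : (forall a, In a l -> f a <= g a) -> lsum l f <= lsum l g.
Proof.
  induction l; intros H. rewrite !lsum_nil; lra.
  rewrite !lsum_cons. assert (f a <= g a) by (apply H; left; auto).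
  assert (lsum l f <= lsum l g) by (apply IHl; intros; apply H; right; auto). lra.
Qed.

Lemma lsum_plus {A} (l : list A) f g : lsum l (fun a => f a + g a) = lsum l f + lsum l g.
Proof. induction l; rewrite ?lsum_cons, ?lsum_nil; [lra|]. rewrite IHl. lra. Qed.

Lemma lsum_scal {A} (l : list A) c f : lsum l (fun a => c * f a) = c * lsum l f.
Proof. induction l; rewrite ?lsum_cons, ?lsum_nil; [lra|]. rewrite IHl. lra. Qed.

Lemma lsum_opp {A} (l : list A) f : lsum l (fun a => - f a) = - lsum l f.
Proof. induction l; rewrite ?lsum_cons, ?lsum_nil; [lra|]. rewrite IHl. lra. Qed.

Lemma lsum_nonneg {A} (l : list A) f : (forall a, In a l -> 0 <= f a) -> 0 <= lsum l f.
Proof. intros H. assert (lsum l (fun _ => 0) = 0).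
  { induction l; auto. rewrite lsum_cons, IHl. lra. intros; apply H; right; auto. }
  rewrite <- H0. apply lsum_le. auto. Qed.

Lemma lsum_In_le {A} (l : list A) f b : (forall a, In a l -> 0 <= f a) -> In b l -> f b <= lsum l f.
Proof.
  induction l; intros H Hb; simpl in Hb. contradiction.
  rewrite lsum_cons. destruct Hb as [<-|Hb].
  - assert (0 <= lsum l f) by (apply lsum_nonneg; intros; apply H; right; auto). lra.
  - assert (0 <= f a) by (apply H; left; auto).
    assert (f b <= lsum l f) by (apply IHl; auto; intros; apply H; right; auto). lra.
Qed.

Lemma lsum_flat_map {A B} (l : list A) (g : A -> list B) f :
  lsum (flat_map g l) f = lsum l (fun a => lsum (g a) f).
Proof. induction l; simpl flat_map; auto. rewrite lsum_app, IHl. reflexivity. Qed.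

Lemma lsum_map {A B} (l : list A) (g : A -> B) f : lsum (map g l) f = lsum l (fun a => f (g a)).
Proof. induction l; simpl map; auto. rewrite !lsum_cons, IHl. reflexivity. Qed.

Lemma lsum_comm {A B} (l1 : list A) (l2 : list B) f :
  lsum l1 (fun a => lsum l2 (f a)) = lsum l2 (fun b => lsum l1 (fun a => f a b)).
Proof.
  induction l1.
  - rewrite lsum_nil. symmetry. induction l2; auto. rewrite lsum_cons, IHl2, lsum_nil. lra.
  - rewrite lsum_cons, IHl1. rewrite <- lsum_plus. apply lsum_ext. intros. rewrite lsum_cons. reflexivity.
Qed.

Lemma lsum_const {A} (l : list A) c : lsum l (fun _ => c) = c * INR (length l).
Proof. induction l; simpl length; rewrite ?lsum_cons, ?lsum_nil. simpl INR; lra.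
  rewrite IHl, S_INR. lra. Qed.

Lemma sumR_lsum n f : sumR n f = lsum (seq 0 n) f.
Proof. reflexivity. Qed.

Lemma sumR_S n f : sumR (S n) f = sumR n f + f n.
Proof. rewrite !sumR_lsum, seq_S, lsum_app. simpl. rewrite lsum_cons, lsum_nil. lra. Qed.

Lemma sumR_delta n y0 g : (y0 < n)%nat ->
  sumR n (fun y => if Nat.eqb y0 y then g y else 0) = g y0.
Proof.
  induction n; intros H. lia.
  rewrite sumR_S. destruct (Nat.eq_dec y0 n).
  - subst. rewrite Nat.eqb_refl. rewrite sumR_lsum.
    rewrite (lsum_ext _ _ (fun _ => 0)). rewrite lsum_const. lra.
    intros a Ha. apply in_seq in Ha. destruct (Nat.eqb_spec n a); [lia|auto].
  - rewrite IHn by lia. destruct (Nat.eqb_spec y0 n); [lia|]. lra.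
Qed.

Lemma fold_max_ge (f : nat -> R) v l a : In a l -> f a <= fold_right (fun i acc => Rmax (f i) acc) v l.
Proof. induction l; simpl; intros H; [contradiction|]. destruct H as [<-|H].
  apply Rmax_l. eapply Rle_trans; [apply IHl; auto|apply Rmax_r]. Qed.
Lemma fold_max_init (f : nat -> R) v l : v <= fold_right (fun i acc => Rmax (f i) acc) v l.
Proof. induction l; simpl. lra. eapply Rle_trans; [apply IHl|apply Rmax_r]. Qed.
Lemma fold_max_le (f : nat -> R) v l c : v <= c -> (forall a, In a l -> f a <= c) ->
  fold_right (fun i acc => Rmax (f i) acc) v l <= c.
Proof. induction l; simpl; intros Hv H; auto. apply Rmax_lub. apply H; auto. apply IHl; auto. Qed.

Lemma maxR_ge n f a : (a < n)%nat -> f a <= maxR n f.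
Proof. intros. unfold maxR. apply fold_max_ge. apply in_seq. lia. Qed.
Lemma maxR_le n f c : (0 < n)%nat -> (forall a, (a < n)%nat -> f a <= c) -> maxR n f <= c.
Proof. intros. unfold maxR. apply fold_max_le. apply H0; auto.
  intros a Ha; apply in_seq in Ha; apply H0; lia. Qed.
Lemma maxR_mono n f g : (0 < n)%nat -> (forall a, (a < n)%nat -> f a <= g a) -> maxR n f <= maxR n g.
Proof. intros. apply maxR_le; auto. intros. eapply Rle_trans; [apply H0; auto|]. apply maxR_ge; auto. Qed.

Section Opt.
Variables (nS nA nH : nat) (P : nat -> nat -> nat -> R) (Rw : nat -> nat -> R).
Hypothesis HA : (0 < nA)%nat.
Hypothesis HP0 : forall x a y, (x < nS)%nat -> (a < nA)%nat -> (y < nS)%nat -> 0 <= P x a y.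
Hypothesis HP1 : forall x a, (x < nS)%nat -> (a < nA)%nat -> sumR nS (fun y => P x a y) = 1.
Hypothesis HR : forall x a, (x < nS)%nat -> (a < nA)%nat -> 0 <= Rw x a <= 1.

Fixpoint Vsb (m : nat) : nat -> R :=
  match m with
  | O => fun _ => 0
  | S m' => fun x => maxR nA (fun a => Rw x a + sumR nS (fun y => P x a y * Vsb m' y))
  end.

Lemma sumP_bounds x a (v : nat -> R) lo hi : (x < nS)%nat -> (a < nA)%nat ->
  (forall y, (y < nS)%nat -> lo <= v y <= hi) ->
  lo <= sumR nS (fun y => P x a y * v y) <= hi.
Proof.
  intros Hx Ha Hv. rewrite sumR_lsum. split.
  - replace lo with (lo * sumR nS (fun y => P x a y)) by (rewrite HP1; auto; lra).
    rewrite sumR_lsum, <- lsum_scal. apply lsum_le. intros y Hy. apply in_seq in Hy.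
    specialize (Hv y ltac:(lia)). specialize (HP0 x a y Hx Ha ltac:(lia)). nra.
  - replace hi with (hi * sumR nS (fun y => P x a y)) by (rewrite HP1; auto; lra).
    rewrite sumR_lsum, <- lsum_scal. apply lsum_le. intros y Hy. apply in_seq in Hy.
    specialize (Hv y ltac:(lia)). specialize (HP0 x a y Hx Ha ltac:(lia)). nra.
Qed.

Lemma sumP_mono x a (v w : nat -> R) : (x < nS)%nat -> (a < nA)%nat ->
  (forall y, (y < nS)%nat -> v y <= w y) ->
  sumR nS (fun y => P x a y * v y) <= sumR nS (fun y => P x a y * w y).
Proof.
  intros Hx Ha H. rewrite !sumR_lsum. apply lsum_le. intros y Hy. apply in_seq in Hy.
  specialize (H y ltac:(lia)). specialize (HP0 x a y Hx Ha ltac:(lia)). nra.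
Qed.

Lemma Vsb_bounds m x : (x < nS)%nat -> 0 <= Vsb m x <= INR m.
Proof.
  revert x; induction m; intros x Hx; simpl Vsb. simpl; lra.
  split.
  - eapply Rle_trans; [|apply (maxR_ge _ _ 0%nat HA)].
    destruct (HR x 0 Hx HA). destruct (sumP_bounds x 0 (Vsb m) 0 (INR m) Hx HA IHm). lra.
  - apply maxR_le; auto. intros a Ha.
    destruct (HR x a Hx Ha). destruct (sumP_bounds x a (Vsb m) 0 (INR m) Hx Ha IHm).
    rewrite S_INR. lra.
Qed.

Lemma Vsb_dom pi m x : valid_policy nS nA pi -> (x < nS)%nat ->
  Vpi_back nS nH P Rw pi m x <= Vsb m x.
Proof.
  intros Hpi. revert x; induction m; intros x Hx; simpl. lra.
  set (a := pi x (nH - m)%nat). assert (Ha : (a < nA)%nat) by (apply Hpi; auto).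
  eapply Rle_trans; [|apply (maxR_ge _ _ a Ha)]. simpl.
  assert (sumR nS (fun y => P x a y * Vpi_back nS nH P Rw pi m y) <=
          sumR nS (fun y => P x a y * Vsb m y)) by (apply sumP_mono; auto). lra.
Qed.
End Opt.

Definition matchxa (x0 a0 : nat) (t : trans) : bool :=
  match t with (x, a, _) => Nat.eqb x x0 && Nat.eqb a a0 end.
Definition cntm x0 a0 (l : list trans) : nat := length (filter (matchxa x0 a0) l).
Definition fullsum x0 a0 (g : nat -> R) (l : list trans) : R :=
  lsum l (fun t => if matchxa x0 a0 t then g (snd t) else 0).

Fixpoint devb x0 a0 (g : nat -> R) (l : list trans) (m : nat) : R :=
  match l with
  | [] => 0
  | t :: l' => if matchxa x0 a0 t then
                 match m with O => 0 | S m' => g (snd t) + devb x0 a0 g l' m' end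
               else devb x0 a0 g l' m
  end.

Lemma cntm_cons x0 a0 t l : cntm x0 a0 (t :: l) =
  (if matchxa x0 a0 t then S (cntm x0 a0 l) else cntm x0 a0 l).
Proof. unfold cntm; simpl. destruct (matchxa x0 a0 t); reflexivity. Qed.

Lemma cntm_le x0 a0 l : (cntm x0 a0 l <= length l)%nat.
Proof. unfold cntm. apply filter_length_le. Qed.

Lemma devb_0 x0 a0 g l : devb x0 a0 g l 0 = 0.
Proof. induction l; simpl; auto. destruct (matchxa x0 a0 a); auto. Qed.

Lemma devb_app x0 a0 g l1 l2 m :
  devb x0 a0 g (l1 ++ l2) m = devb x0 a0 g l1 m + devb x0 a0 g l2 (m - cntm x0 a0 l1).
Proof.
  revert m; induction l1; intros m; simpl app. simpl. rewrite Nat.sub_0_r. lra.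
  rewrite cntm_cons. simpl. destruct (matchxa x0 a0 a).
  - destruct m. simpl. rewrite devb_0. lra. rewrite IHl1. simpl. lra.
  - apply IHl1.
Qed.

Lemma devb_full x0 a0 g l m : (cntm x0 a0 l <= m)%nat -> devb x0 a0 g l m = fullsum x0 a0 g l.
Proof.
  unfold fullsum. revert m; induction l; intros m H. reflexivity.
  rewrite lsum_cons. rewrite cntm_cons in H. simpl. destruct (matchxa x0 a0 a).
  - destruct m. lia. rewrite IHl by lia. reflexivity.
  - rewrite IHl by lia. lra.
Qed.

Lemma devb_lower x0 a0 g al be l m : 0 <= be ->
  al * devb x0 a0 g l m - be * INR m <= devb x0 a0 (fun y => al * g y - be) l m.
Proof.
  intros Hb. revert m; induction l; intros m; simpl.
  - assert (0 <= INR m) by apply pos_INR. nra.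
  - destruct (matchxa x0 a0 a).
    + destruct m. simpl. lra. specialize (IHl m). rewrite S_INR. nra.
    + apply IHl.
Qed.

Lemma cnt3_cons t l x a y : cnt3 (t :: l) x a y =
  ((if (matchxa x a t && Nat.eqb (snd t) y)%bool then 1 else 0) + cnt3 l x a y)%nat.
Proof.
  destruct t as [[x' a'] y']. unfold cnt3. simpl.
  destruct (x' =? x), (a' =? a), (y' =? y); reflexivity.
Qed.

Lemma INR_fold_nat (f : nat -> nat) l :
  INR (fold_right (fun y acc => (f y + acc)%nat) 0%nat l) = lsum l (fun y => INR (f y)).
Proof. induction l; simpl fold_right. reflexivity. rewrite plus_INR, IHl, lsum_cons. reflexivity. Qed.

Lemma INR_Nxa nS l x a : INR (Nxa nS l x a) = sumR nS (fun y => INR (cnt3 l x a y)).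
Proof. unfold Nxa. rewrite INR_fold_nat. reflexivity. Qed.

Lemma cnt_sum nS l x a g : (forall t, In t l -> (snd t < nS)%nat) ->
  sumR nS (fun y => INR (cnt3 l x a y) * g y) = fullsum x a g l.
Proof.
  unfold fullsum. induction l; intros Hl.
  - rewrite sumR_lsum, (lsum_ext _ _ (fun _ => 0)), lsum_const, lsum_nil. lra.
    intros; unfold cnt3; simpl; lra.
  - rewrite lsum_cons. assert (IH := IHl (fun t Ht => Hl t (or_intror Ht))).
    rewrite <- IH. clear IH IHl.
    rewrite !sumR_lsum.
    rewrite (lsum_ext _ _ (fun y => (if (matchxa x a a0 && Nat.eqb (snd a0) y)%bool then g y else 0)
       + INR (cnt3 l x a y) * g y)).
    2:{ intros y _. rewrite cnt3_cons, plus_INR.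
        destruct (matchxa x a a0 && (snd a0 =? y))%bool; simpl INR; lra. }
    rewrite lsum_plus. f_equal. destruct (matchxa x a a0).
    + simpl. rewrite <- sumR_lsum. apply sumR_delta. apply Hl; left; auto.
    + simpl. rewrite lsum_const. lra.
Qed.

Lemma fullsum_one x a l : fullsum x a (fun _ => 1) l = INR (cntm x a l).
Proof.
  unfold fullsum. induction l. reflexivity.
  rewrite lsum_cons, IHl, cntm_cons. destruct (matchxa x a a0); rewrite ?S_INR; lra.
Qed.

Lemma Nxa_cntm nS l x a : (forall t, In t l -> (snd t < nS)%nat) -> Nxa nS l x a = cntm x a l.
Proof.
  intros H. apply INR_eq. rewrite INR_Nxa, <- fullsum_one, <- (cnt_sum nS) by auto.
  apply lsum_ext. intros; lra.
Qed.

Section UC.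
Variables (nS nA nH nK : nat) (P : nat -> nat -> nat -> R) (Rw : nat -> nat -> R) (delta : R).
Hypothesis HA : (0 < nA)%nat.
Hypothesis HP0 : forall x a y, (x < nS)%nat -> (a < nA)%nat -> (y < nS)%nat -> 0 <= P x a y.
Hypothesis HP1 : forall x a, (x < nS)%nat -> (a < nA)%nat -> sumR nS (fun y => P x a y) = 1.
Hypothesis HR : forall x a, (x < nS)%nat -> (a < nA)%nat -> 0 <= Rw x a <= 1.

Let sb := sumP_bounds nS nA P HA HP0 HP1.
Let vb := Vsb_bounds nS nA P Rw HA HP0 HP1 HR.
Let vd := Vsb_dom nS nA nH P Rw HA HP0.

Definition mu x a m := sumR nS (fun y => P x a y * Vsb nS nA P Rw m y).
Definition Qstar h x a := Rw x a + mu x a (nH - h).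
Definition bval n := 7 * INR nH * Lp nS nA nH nK delta / sqrt (INR n).

Definition ConcH hist := forall x a m, (x < nS)%nat -> (a < nA)%nat -> (m < nH)%nat ->
  (0 < Nxa nS hist x a)%nat ->
  mu x a m <= sumR nS (fun y => Phat nS hist x a y * Vsb nS nA P Rw m y)
              + bonus nS nA nH nK delta hist x a.

Lemma mu_bounds x a m : (x < nS)%nat -> (a < nA)%nat -> 0 <= mu x a m <= INR m.
Proof.
  intros. unfold mu. apply sb; auto.
Qed.

Lemma Qstar_le_H h x a : (1 <= h <= nH)%nat -> (x < nS)%nat -> (a < nA)%nat -> Qstar h x a <= INR nH.
Proof.
  intros Hh Hx Ha. unfold Qstar. destruct (HR x a Hx Ha). destruct (mu_bounds x a (nH - h) Hx Ha).
  rewrite minus_INR in H2 by lia. assert (1 <= INR h) by (apply (le_INR 1); lia). lra.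
Qed.

Lemma Phat_nonneg hist x a y : (0 < Nxa nS hist x a)%nat -> 0 <= Phat nS hist x a y.
Proof.
  intros H. unfold Phat. apply Rmult_le_pos. apply pos_INR.
  left; apply Rinv_0_lt_compat; apply lt_0_INR; auto.
Qed.

Lemma Qcore_ge hist Qprev h Vnext x a : ConcH hist -> (1 <= h <= nH)%nat -> (x < nS)%nat -> (a < nA)%nat ->
  Qstar h x a <= Qprev h x a -> (forall y, (y < nS)%nat -> Vsb nS nA P Rw (nH - h) y <= Vnext y) ->
  Qstar h x a <= Qcore nS nA nH nK Rw delta hist Qprev h Vnext x a.
Proof.
  intros HC Hh Hx Ha HQ HV. unfold Qcore. destruct (Nat.ltb_spec 0 (Nxa nS hist x a)).
  - apply Rmin_glb; auto. apply Rmin_glb. apply Qstar_le_H; auto.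
    unfold Qstar. specialize (HC x a (nH - h)%nat Hx Ha ltac:(lia) H).
    assert (sumR nS (fun y => Phat nS hist x a y * Vsb nS nA P Rw (nH - h) y) <=
            sumR nS (fun y => Phat nS hist x a y * Vnext y)).
    { rewrite !sumR_lsum. apply lsum_le. intros y Hy. apply in_seq in Hy.
      apply Rmult_le_compat_l. apply Phat_nonneg; auto. apply HV; lia. }
    lra.
  - apply Qstar_le_H; auto.
Qed.

Lemma Vback_ge hist Qprev : ConcH hist ->
  (forall h x a, (1 <= h <= nH)%nat -> (x < nS)%nat -> (a < nA)%nat -> Qstar h x a <= Qprev h x a) ->
  forall m, (m <= nH)%nat -> forall y, (y < nS)%nat ->
  Vsb nS nA P Rw m y <= Vback nS nA nH nK Rw delta hist Qprev m y.
Proof.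
  intros HC HQ. induction m; intros Hm y Hy; simpl. lra.
  apply maxR_mono; auto. intros a Ha.
  assert (E : Rw y a + sumR nS (fun y0 => P y a y0 * Vsb nS nA P Rw m y0) = Qstar (nH - m) y a).
  { unfold Qstar, mu. replace (nH - (nH - m))%nat with m by lia. reflexivity. }
  rewrite E. apply Qcore_ge; auto; try lia.
  apply HQ; auto; lia.
  intros y0 Hy0. replace (nH - (nH - m))%nat with m by lia. apply IHm; auto; lia.
Qed.

Lemma Qk_ge eps : (forall k', ConcH (concat (firstn k' eps))) ->
  forall k h x a, (1 <= h <= nH)%nat -> (x < nS)%nat -> (a < nA)%nat ->
  Qstar h x a <= Qk nS nA nH nK Rw delta eps k h x a.
Proof.
  intros HC. induction k; intros h x a Hh Hx Ha; simpl.
  - apply Qstar_le_H; auto.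
  - unfold Qlev. apply Qcore_ge; auto.
    intros y Hy. apply Vback_ge; auto; lia.
Qed.

Lemma opt_of_conc eps : (forall k', ConcH (concat (firstn k' eps))) ->
  optimism nS nA nH nK P Rw delta eps.
Proof.
  intros HC. unfold optimism, dominates_opt. intros k h x Hk Hh Hx pi Hpi.
  destruct k. lia. simpl Vk. unfold Vlev, Vpi. apply Rle_ge.
  eapply Rle_trans. apply vd; auto.
  apply Vback_ge; auto; try lia. apply Qk_ge; auto.
Qed.

Definition g0 x0 a0 m y := mu x0 a0 m - Vsb nS nA P Rw m y.

Definition GoodD (D : list trans) := forall x0 a0 m n, (x0 < nS)%nat -> (a0 < nA)%nat -> (m < nH)%nat ->
  (1 <= n <= nK * nH)%nat -> bval n < INR nH -> devb x0 a0 (g0 x0 a0 m) D n <= INR n * bval n.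

Lemma conc_from_good D hist rest : (forall t, In t D -> (snd t < nS)%nat) ->
  (length D <= nK * nH)%nat -> GoodD D -> D = hist ++ rest -> ConcH hist.
Proof.
  intros HD HL HG ->. intros x a m Hx Ha Hm HN.
  assert (Hh : forall t, In t hist -> (snd t < nS)%nat) by (intros; apply HD, in_or_app; auto).
  set (N := Nxa nS hist x a) in *.
  assert (HNc : N = cntm x a hist) by (apply Nxa_cntm; auto).
  assert (HNl : (N <= nK * nH)%nat).
  { rewrite HNc. eapply Nat.le_trans. apply cntm_le. rewrite length_app in HL. eapply Nat.le_trans; [apply Nat.le_add_r|exact HL]. }
  assert (HNR : 0 < INR N) by (apply lt_0_INR; auto).
  assert (Hs : sumR nS (fun y => Phat nS hist x a y * Vsb nS nA P Rw m y)
             = / INR N * sumR nS (fun y => INR (cnt3 hist x a y) * Vsb nS nA P Rw m y)).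
  { rewrite !sumR_lsum, <- lsum_scal. apply lsum_ext. intros. unfold Phat. fold N. unfold Rdiv. lra. }
  assert (Hs0 : 0 <= sumR nS (fun y => INR (cnt3 hist x a y) * Vsb nS nA P Rw m y)).
  { rewrite sumR_lsum. apply lsum_nonneg. intros y Hy; apply in_seq in Hy.
    apply Rmult_le_pos. apply pos_INR. apply vb; auto; lia. }
  assert (Hinv : 0 < / INR N) by (apply Rinv_0_lt_compat; auto).
  change (bonus nS nA nH nK delta hist x a) with (bval N).
  destruct (Rlt_or_le (bval N) (INR nH)) as [Hb|Hb].
  - specialize (HG x a m N Hx Ha Hm ltac:(lia) Hb).
    rewrite devb_app, <- HNc, Nat.sub_diag in HG.
    rewrite devb_0, Rplus_0_r, devb_full in HG by lia.
    rewrite <- (cnt_sum nS) in HG by auto.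
    assert (E : sumR nS (fun y => INR (cnt3 hist x a y) * g0 x a m y) =
       mu x a m * INR N - sumR nS (fun y => INR (cnt3 hist x a y) * Vsb nS nA P Rw m y)).
    { unfold g0, N. rewrite INR_Nxa, !sumR_lsum.
      rewrite (lsum_ext _ _ (fun y => mu x a m * INR (cnt3 hist x a y) + - (INR (cnt3 hist x a y) * Vsb nS nA P Rw m y))) by (intros; lra).
      rewrite lsum_plus, lsum_opp, lsum_scal. lra. }
    rewrite E in HG. rewrite Hs.
    assert (mu x a m <= / INR N * sumR nS (fun y => INR (cnt3 hist x a y) * Vsb nS nA P Rw m y) + bval N).
    { apply (Rmult_le_reg_l (INR N)); auto. rewrite Rmult_plus_distr_l, <- Rmult_assoc, Rinv_r by lra. lra. }
    lra.
  - destruct (mu_bounds x a m Hx Ha). assert (INR m <= INR nH) by (apply le_INR; lia).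
    rewrite Hs. assert (0 <= / INR N * sumR nS (fun y => INR (cnt3 hist x a y) * Vsb nS nA P Rw m y)) by nra.
    lra.
Qed.
End UC.

Lemma all_seqs_S L m : all_seqs (S L) m = flat_map (fun y => map (cons y) (all_seqs L m)) (seq 0 m).
Proof. reflexivity. Qed.
Lemma all_outcomes_S K nH nS : all_outcomes (S K) nH nS =
  flat_map (fun ys => map (cons ys) (all_outcomes K nH nS)) (all_seqs nH nS).
Proof. reflexivity. Qed.

Lemma in_all_seqs L m ys : In ys (all_seqs L m) -> length ys = L /\ forall y, In y ys -> (y < m)%nat.
Proof.
  revert ys; induction L; intros ys H.
  - simpl in H. destruct H as [<-|[]]. simpl; split; auto. intros _ [].
  - rewrite all_seqs_S in H. apply in_flat_map in H. destruct H as [y [Hy H]].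
    apply in_map_iff in H. destruct H as [ys' [<- H]]. apply IHL in H. destruct H.
    apply in_seq in Hy. simpl. split. auto. intros z [<-|Hz]. lia. auto.
Qed.

Lemma in_all_outcomes K nH nS om : In om (all_outcomes K nH nS) ->
  length om = K /\ forall ys, In ys om -> In ys (all_seqs nH nS).
Proof.
  revert om; induction K; intros om H.
  - simpl in H. destruct H as [<-|[]]. simpl; split; auto. intros _ [].
  - rewrite all_outcomes_S in H. apply in_flat_map in H. destruct H as [ys [Hy H]].
    apply in_map_iff in H. destruct H as [om' [<- H]]. apply IHK in H. destruct H.
    simpl. split. auto. intros z [<-|Hz]; auto.
Qed.

Lemma devb_cons x0 a0 g x a y l m : devb x0 a0 g ((x, a, y) :: l) m =
  if (Nat.eqb x x0 && Nat.eqb a a0)%bool then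
    match m with O => 0 | S m' => g y + devb x0 a0 g l m' end
  else devb x0 a0 g l m.
Proof. reflexivity. Qed.

Section Prob.
Variables (nS nA nH : nat) (P : nat -> nat -> nat -> R)
  (start : nat -> list episode -> nat) (pick : nat -> nat -> nat -> list episode -> nat).
Hypothesis HP0 : forall x a y, (x < nS)%nat -> (a < nA)%nat -> (y < nS)%nat -> 0 <= P x a y.
Hypothesis HP1 : forall x a, (x < nS)%nat -> (a < nA)%nat -> sumR nS (fun y => P x a y) = 1.
Hypothesis Hpick : forall k h x eps, (1 <= k)%nat -> (1 <= h <= nH)%nat -> (x < nS)%nat ->
  (pick k h x eps < nA)%nat.
Hypothesis Hstart : forall k eps, (start k eps < nS)%nat.

Lemma run_ep_cons k h x eps y ys : run_ep P pick k h x eps (y :: ys) =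
  ((x, pick k h x eps, y) :: fst (run_ep P pick k (S h) y eps ys),
   P x (pick k h x eps) y * snd (run_ep P pick k (S h) y eps ys)).
Proof. simpl. destruct (run_ep P pick k (S h) y eps ys); reflexivity. Qed.

Lemma run_cons k eps ys om : run P start pick k eps (ys :: om) =
  (fst (run P start pick (S k) (eps ++ [fst (run_ep P pick k 1 (start k eps) eps ys)]) om),
   snd (run_ep P pick k 1 (start k eps) eps ys) *
   snd (run P start pick (S k) (eps ++ [fst (run_ep P pick k 1 (start k eps) eps ys)]) om)).
Proof.
  simpl. destruct (run_ep P pick k 1 (start k eps) eps ys) as [tr p].
  simpl. destruct (run P start pick (S k) (eps ++ [tr]) om); reflexivity.
Qed.

Lemma run_ep_snd k h x eps ys : map snd (fst (run_ep P pick k h x eps ys)) = ys.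
Proof.
  revert h x; induction ys; intros h x. reflexivity.
  rewrite run_ep_cons. simpl. rewrite IHys. reflexivity.
Qed.

Lemma run_ep_nonneg k L : (1 <= k)%nat -> forall h x eps ys, In ys (all_seqs L nS) ->
  (1 <= h)%nat -> (h + L = nH + 1)%nat -> (x < nS)%nat -> 0 <= snd (run_ep P pick k h x eps ys).
Proof.
  intros Hk. induction L; intros h x eps ys Hys Hh HL Hx.
  - simpl in Hys. destruct Hys as [<-|[]]. simpl. lra.
  - rewrite all_seqs_S in Hys. apply in_flat_map in Hys. destruct Hys as [y [Hy H]].
    apply in_map_iff in H. destruct H as [ys' [<- H]]. apply in_seq in Hy.
    rewrite run_ep_cons. simpl snd. apply Rmult_le_pos.
    apply HP0; auto. apply Hpick; auto; lia. lia.
    apply IHL; auto; lia.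
Qed.

Lemma run_nonneg K : forall k eps om, (1 <= k)%nat -> In om (all_outcomes K nH nS) ->
  0 <= snd (run P start pick k eps om).
Proof.
  induction K; intros k eps om Hk Hom.
  - simpl in Hom. destruct Hom as [<-|[]]. simpl. lra.
  - rewrite all_outcomes_S in Hom. apply in_flat_map in Hom. destruct Hom as [ys [Hy H]].
    apply in_map_iff in H. destruct H as [om' [<- H]].
    rewrite run_cons. simpl snd. apply Rmult_le_pos.
    apply (run_ep_nonneg k nH); auto; lia.
    apply IHK; auto.
Qed.

Lemma run_struct K : forall k eps om, In om (all_outcomes K nH nS) ->
  exists X, fst (run P start pick k eps om) = eps ++ X /\ length X = K /\
    forall ep, In ep X -> length ep = nH /\ forall t, In t ep -> (snd t < nS)%nat.
Proof.
  induction K; intros k eps om Hom.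
  - simpl in Hom. destruct Hom as [<-|[]]. exists []. simpl. rewrite app_nil_r. split; auto. split; auto. intros _ [].
  - rewrite all_outcomes_S in Hom. apply in_flat_map in Hom. destruct Hom as [ys [Hy H]].
    apply in_map_iff in H. destruct H as [om' [<- H]].
    rewrite run_cons. simpl fst.
    destruct (IHK (S k) (eps ++ [fst (run_ep P pick k 1 (start k eps) eps ys)]) om' H) as [X [E [HX1 HX2]]].
    exists (fst (run_ep P pick k 1 (start k eps) eps ys) :: X). rewrite E, <- app_assoc. simpl.
    split; auto. split; auto.
    apply in_all_seqs in Hy. destruct Hy as [Hy1 Hy2].
    intros ep [<-|Hep]; auto. split.
    + assert (H2 := f_equal (@length nat) (run_ep_snd k 1 (start k eps) eps ys)). rewrite length_map in H2. etransitivity; [exact H2|exact Hy1].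
    + intros t Ht. apply Hy2. rewrite <- (run_ep_snd k 1 (start k eps) eps ys). apply in_map. auto.
Qed.

Lemma massA k L : (1 <= k)%nat -> forall h x eps,
  (1 <= h)%nat -> (h + L = nH + 1)%nat -> (x < nS)%nat ->
  lsum (all_seqs L nS) (fun ys => snd (run_ep P pick k h x eps ys)) = 1.
Proof.
  intros Hk. induction L; intros h x eps Hh HL Hx.
  - simpl all_seqs. rewrite lsum_cons, lsum_nil. simpl. lra.
  - rewrite all_seqs_S, lsum_flat_map.
    assert (Ha : (pick k h x eps < nA)%nat) by (apply Hpick; auto; lia).
    rewrite <- (HP1 x (pick k h x eps)) by auto. rewrite sumR_lsum. apply lsum_ext.
    intros y Hy. apply in_seq in Hy. rewrite lsum_map.
    rewrite (lsum_ext _ _ (fun ys => P x (pick k h x eps) y * snd (run_ep P pick k (S h) y eps ys))).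
    rewrite lsum_scal, IHL by (auto; lia). lra.
    intros ys _. rewrite run_ep_cons. reflexivity.
Qed.

Lemma massB K : forall k eps, (1 <= k)%nat ->
  lsum (all_outcomes K nH nS) (fun om => snd (run P start pick k eps om)) = 1.
Proof.
  induction K; intros k eps Hk.
  - simpl all_outcomes. rewrite lsum_cons, lsum_nil. simpl. lra.
  - rewrite all_outcomes_S, lsum_flat_map.
    rewrite <- (massA k nH Hk 1 (start k eps) eps) by (auto; lia).
    apply lsum_ext. intros ys Hys. rewrite lsum_map.
    rewrite (lsum_ext _ _ (fun om => snd (run_ep P pick k 1 (start k eps) eps ys) *
       snd (run P start pick (S k) (eps ++ [fst (run_ep P pick k 1 (start k eps) eps ys)]) om))).
    rewrite lsum_scal, IHK by lia. lra.
    intros om _. rewrite run_cons. reflexivity.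
Qed.

Variables (x0 a0 : nat) (g : nat -> R).
Hypothesis Hg : sumR nS (fun y => P x0 a0 y * exp (g y)) <= 1.

Lemma supA k L : (1 <= k)%nat -> forall h x eps m,
  (1 <= h)%nat -> (h + L = nH + 1)%nat -> (x < nS)%nat ->
  lsum (all_seqs L nS) (fun ys => snd (run_ep P pick k h x eps ys) *
     exp (devb x0 a0 g (fst (run_ep P pick k h x eps ys)) m)) <= 1.
Proof.
  intros Hk. induction L; intros h x eps m Hh HL Hx.
  - simpl. rewrite lsum_cons, lsum_nil. simpl. rewrite exp_0. lra.
  - rewrite all_seqs_S, lsum_flat_map.
    set (a := pick k h x eps).
    assert (Ha : (a < nA)%nat) by (apply Hpick; auto; lia).
    assert (CB : (forall y l, devb x0 a0 g ((x, a, y) :: l) m = devb x0 a0 g l m) ->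
      lsum (seq 0 nS) (fun y => lsum (map (cons y) (all_seqs L nS)) (fun ys =>
        snd (run_ep P pick k h x eps ys) * exp (devb x0 a0 g (fst (run_ep P pick k h x eps ys)) m))) <= 1).
    { intros Hd. rewrite <- (HP1 x a) by auto. rewrite sumR_lsum. apply lsum_le.
      intros y Hy. apply in_seq in Hy. rewrite lsum_map.
      rewrite (lsum_ext _ _ (fun ys => P x a y * (snd (run_ep P pick k (S h) y eps ys) *
          exp (devb x0 a0 g (fst (run_ep P pick k (S h) y eps ys)) m)))).
      rewrite lsum_scal. rewrite <- Rmult_1_r. apply Rmult_le_compat_l. apply HP0; auto; lia.
      apply IHL; auto; lia.
      intros ys _. rewrite run_ep_cons. simpl fst; simpl snd. fold a. rewrite Hd. ring. }
    destruct (Nat.eqb x x0 && Nat.eqb a a0)%bool eqn:Em; [destruct m as [|m']|].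
    + apply CB. intros. rewrite devb_cons, Em, devb_0. reflexivity.
    + apply andb_prop in Em. destruct Em as [E1 E2]. apply Nat.eqb_eq in E1, E2.
      eapply Rle_trans; [|apply Hg]. rewrite sumR_lsum. apply lsum_le.
      intros y Hy. apply in_seq in Hy. rewrite lsum_map.
      rewrite (lsum_ext _ _ (fun ys => P x a y * exp (g y) * (snd (run_ep P pick k (S h) y eps ys) *
          exp (devb x0 a0 g (fst (run_ep P pick k (S h) y eps ys)) m')))).
      rewrite lsum_scal. subst x. rewrite E2. rewrite <- Rmult_1_r. apply Rmult_le_compat_l.
      apply Rmult_le_pos. apply HP0; auto; lia. left; apply exp_pos.
      apply IHL; auto; lia.
      intros ys _. rewrite run_ep_cons. simpl fst; simpl snd. fold a. rewrite devb_cons.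
      rewrite E1, E2, !Nat.eqb_refl. simpl. rewrite exp_plus. ring.
    + apply CB. intros. rewrite devb_cons, Em. reflexivity.
Qed.

Lemma supB K n : forall k eps, (1 <= k)%nat ->
  lsum (all_outcomes K nH nS) (fun om => snd (run P start pick k eps om) *
     exp (devb x0 a0 g (concat (fst (run P start pick k eps om))) n))
  <= exp (devb x0 a0 g (concat eps) n).
Proof.
  induction K; intros k eps Hk.
  - simpl. rewrite lsum_cons, lsum_nil. simpl. lra.
  - rewrite all_outcomes_S, lsum_flat_map.
    eapply Rle_trans with (lsum (all_seqs nH nS) (fun ys => exp (devb x0 a0 g (concat eps) n) *
       (snd (run_ep P pick k 1 (start k eps) eps ys) *
        exp (devb x0 a0 g (fst (run_ep P pick k 1 (start k eps) eps ys))
              (n - cntm x0 a0 (concat eps)))))).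
    + apply lsum_le. intros ys Hys. rewrite lsum_map.
      set (tr := fst (run_ep P pick k 1 (start k eps) eps ys)).
      set (p := snd (run_ep P pick k 1 (start k eps) eps ys)).
      rewrite (lsum_ext _ _ (fun om => p * (snd (run P start pick (S k) (eps ++ [tr]) om) *
         exp (devb x0 a0 g (concat (fst (run P start pick (S k) (eps ++ [tr]) om))) n)))).
      2:{ intros om _. rewrite run_cons. simpl fst; simpl snd. fold tr p. ring. }
      rewrite lsum_scal.
      assert (Hp : 0 <= p) by (apply (run_ep_nonneg k nH); auto; lia).
      eapply Rle_trans. apply Rmult_le_compat_l; [exact Hp | apply IHK; lia].
      rewrite concat_app. simpl concat. rewrite app_nil_r, devb_app, exp_plus. lra.
    + rewrite lsum_scal. rewrite <- (Rmult_1_r (exp _)) at 2. apply Rmult_le_compat_l.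
      left; apply exp_pos. apply supA; auto; lia.
Qed.
End Prob.

Lemma exp_quad z : z <= 1/2 -> exp z <= 1 + z + 2 * z ^ 2.
Proof.
  intros Hz. assert (H1 := exp_ineq1_le (- z)).
  assert (E : exp z * exp (- z) = 1) by (rewrite <- exp_plus; replace (z + - z) with 0 by ring; apply exp_0).
  assert (Hp := exp_pos z).
  assert (H2 : exp z * (1 - z) <= 1).
  { rewrite <- E. apply Rmult_le_compat_l; lra. }
  assert (H3 : 1 <= (1 + z + 2 * z ^ 2) * (1 - z)).
  { assert (0 <= z ^ 2 * (1 - 2 * z)) by (apply Rmult_le_pos; [apply pow2_ge_0 | lra]). nra. }
  apply (Rmult_le_reg_r (1 - z)); lra.
Qed.

Lemma mgf n (p X : nat -> R) c lam : (forall y, (y < n)%nat -> 0 <= p y) ->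
  sumR n p = 1 -> sumR n (fun y => p y * X y) = 0 ->
  (forall y, (y < n)%nat -> - c <= X y <= c) -> 0 <= lam -> lam * c <= 1/2 ->
  sumR n (fun y => p y * exp (lam * X y - 2 * lam ^ 2 * c ^ 2)) <= 1.
Proof.
  intros Hp H1 H0 HX Hl Hlc.
  set (B := 2 * lam ^ 2 * c ^ 2). set (E := exp (- B)).
  assert (HE : 0 < E) by apply exp_pos.
  eapply Rle_trans with (sumR n (fun y => E * p y + (E * lam) * (p y * X y) + (E * B) * p y)).
  - rewrite !sumR_lsum. apply lsum_le. intros y Hy. apply in_seq in Hy.
    specialize (Hp y ltac:(lia)). specialize (HX y ltac:(lia)).
    unfold Rminus. rewrite exp_plus. fold E.
    assert (Hq := exp_quad (lam * X y) ltac:(nra)).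
    assert (X y ^ 2 <= c ^ 2) by nra.
    assert (exp (lam * X y) <= 1 + lam * X y + B) by (unfold B; nra).
    assert (p y * exp (lam * X y) <= p y * (1 + lam * X y + B)) by (apply Rmult_le_compat_l; auto).
    nra.
  - rewrite !sumR_lsum, !lsum_plus, !lsum_scal. rewrite <- !sumR_lsum. rewrite H1, H0.
    assert (Hb := exp_ineq1_le B). unfold E. rewrite exp_Ropp.
    assert (0 < exp B) by apply exp_pos.
    replace (/ exp B * 1 + / exp B * lam * 0 + / exp B * B * 1) with ((1 + B) / exp B) by (field; lra).
    apply (Rmult_le_reg_r (exp B)); auto. unfold Rdiv. rewrite Rmult_assoc, Rinv_l; lra.
Qed.

Lemma length_flat_map_const {A B} (f : A -> list B) l c : (forall a, length (f a) = c) ->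
  length (flat_map f l) = (length l * c)%nat.
Proof. intros H. induction l; simpl; auto. rewrite length_app, H, IHl. lia. Qed.

Lemma length_concat_const {A} (l : list (list A)) c : (forall a, In a l -> length a = c) ->
  length (concat l) = (length l * c)%nat.
Proof. induction l; intros H; simpl; auto. rewrite length_app, H, IHl; auto. intros; apply H; right; auto. left; auto. Qed.


Lemma ind_1 (Q : Prop) : Q -> Defs.ind Q = 1.
Proof. intros HQ. unfold Defs.ind. destruct (excluded_middle_informative Q) as [q|q]. reflexivity. exfalso. apply q. exact HQ. Qed.
Lemma ind_0 (Q : Prop) : ~ Q -> Defs.ind Q = 0.
Proof. intros HQ. unfold Defs.ind. destruct (excluded_middle_informative Q) as [q|q]. exfalso; apply HQ; exact q. reflexivity. Qed.
Lemma ind_bounds (Q : Prop) : 0 <= Defs.ind Q <= 1.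
Proof. unfold Defs.ind. destruct (excluded_middle_informative Q); lra. Qed.

Lemma exp_le' x y : x <= y -> exp x <= exp y.
Proof. intros [H|H]. left; apply exp_increasing; auto. subst; lra. Qed.

Lemma prob_eq nS nA nH nK P Rw delta start pick :
  prob_optimism nS nA nH nK P Rw delta start pick =
  lsum (all_outcomes nK nH nS) (fun om => snd (run P start pick 1 [] om) *
     Defs.ind (optimism nS nA nH nK P Rw delta (fst (run P start pick 1 [] om)))).
Proof.
  unfold prob_optimism. induction (all_outcomes nK nH nS) as [|om L IH].
  reflexivity. simpl fold_right. rewrite lsum_cons, <- IH.
  destruct (run P start pick 1 [] om); reflexivity.
Qed.

Section Main.
Variables (nS nA nH nK : nat) (P : nat -> nat -> nat -> R) (Rw : nat -> nat -> R) (delta : R)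
  (start : nat -> list episode -> nat) (pick : nat -> nat -> nat -> list episode -> nat).
Hypothesis HS : (0 < nS)%nat.
Hypothesis HA : (0 < nA)%nat.
Hypothesis HH : (0 < nH)%nat.
Hypothesis HK : (1 <= nK)%nat.
Hypothesis HP0 : forall x a y, (x < nS)%nat -> (a < nA)%nat -> (y < nS)%nat -> 0 <= P x a y.
Hypothesis HP1 : forall x a, (x < nS)%nat -> (a < nA)%nat -> sumR nS (fun y => P x a y) = 1.
Hypothesis HR : forall x a, (x < nS)%nat -> (a < nA)%nat -> 0 <= Rw x a <= 1.
Hypothesis Hpick : forall k h x eps, (1 <= k)%nat -> (1 <= h <= nH)%nat -> (x < nS)%nat ->
  (pick k h x eps < nA)%nat.
Hypothesis Hstart : forall k eps, (start k eps < nS)%nat.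
Hypothesis Hd : 0 < delta.
Hypothesis Hd1 : delta < 1.

Definition tuples : list (nat * nat * nat * nat) :=
  flat_map (fun x0 => flat_map (fun a0 => flat_map (fun m =>
    map (fun n => (x0, a0, m, n)) (seq 1 (nK * nH))) (seq 0 nH)) (seq 0 nA)) (seq 0 nS).

Definition Btup (t : nat * nat * nat * nat) (e : list episode) : Prop :=
  match t with (x0, a0, m, n) =>
    bval nS nA nH nK delta n < INR nH /\
    INR n * bval nS nA nH nK delta n < devb x0 a0 (g0 nS nA P Rw x0 a0 m) (concat e) n
  end.

Definition pr om := snd (run P start pick 1 [] om).
Definition ev om := fst (run P start pick 1 [] om).

Lemma Lp_ge1 : 1 <= Lp nS nA nH nK delta.
Proof.
  unfold Lp, Ttot.
  assert (1 <= INR nS) by (apply (le_INR 1); lia).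
  assert (1 <= INR nA) by (apply (le_INR 1); lia).
  assert (1 <= INR (nK * nH)) by (apply (le_INR 1); nia).
  assert (1 < / delta) by (rewrite <- Rinv_1; apply Rinv_lt_contravar; lra).
  assert (1 <= INR nS * INR nA * INR (nK * nH)).
  { assert (1 <= INR nS * INR nA) by nra. nra. }
  assert (5 < 5 * INR nS * INR nA * INR (nK * nH) / delta).
  { unfold Rdiv. nra. }
  rewrite <- (ln_exp 1). left. apply ln_increasing. apply exp_pos.
  assert (H5 := exp_le_3). lra.
Qed.

Lemma tuple_bound x0 a0 m n : (x0 < nS)%nat -> (a0 < nA)%nat -> (m < nH)%nat -> (1 <= n)%nat ->
  lsum (all_outcomes nK nH nS) (fun om => pr om * Defs.ind (Btup (x0, a0, m, n) (ev om)))
  <= exp (- (2 * Lp nS nA nH nK delta)).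
Proof.
  intros Hx Ha Hm Hn.
  assert (Hex := exp_pos (- (2 * Lp nS nA nH nK delta))).
  destruct (Rlt_or_le (bval nS nA nH nK delta n) (INR nH)) as [Hbc|Hbc].
  2:{ rewrite (lsum_ext _ _ (fun _ => 0)). rewrite lsum_const. lra.
      intros om _. rewrite ind_0. ring. simpl. intros [H _]. lra. }
  assert (HL := Lp_ge1).
  set (L := Lp nS nA nH nK delta) in *.
  set (c := INR nH) in *.
  assert (Hc : 0 < c) by (apply lt_0_INR; auto).
  assert (HnR : 0 < INR n) by (apply lt_0_INR; lia).
  set (s := sqrt (INR n)).
  assert (Hs : 0 < s) by (apply sqrt_lt_R0; auto).
  assert (Hss : s * s = INR n) by (apply sqrt_sqrt; lra).
  set (b := bval nS nA nH nK delta n) in *.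
  assert (Hbv : b = 7 * c * L / s) by reflexivity.
  assert (Hb : 0 < b) by (rewrite Hbv; unfold Rdiv; apply Rmult_lt_0_compat; [nra | apply Rinv_0_lt_compat; auto]).
  set (lam := b / (4 * c ^ 2)).
  assert (Hl : 0 < lam) by (unfold lam; unfold Rdiv; apply Rmult_lt_0_compat; auto; apply Rinv_0_lt_compat; nra).
  assert (Hlc : lam * c <= 1 / 2).
  { unfold lam. replace (b / (4 * c ^ 2) * c) with (b / c / 4) by (field; lra).
    assert (b / c < 1). { apply (Rmult_lt_reg_r c); auto. unfold Rdiv. rewrite Rmult_assoc, Rinv_l; lra. }
    lra. }
  set (g := fun y => lam * g0 nS nA P Rw x0 a0 m y - 2 * lam ^ 2 * c ^ 2).
  assert (Hmu := mu_bounds nS nA P Rw HA HP0 HP1 HR x0 a0 m Hx Ha).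
  assert (HmH : INR m <= c) by (apply le_INR; lia).
  assert (Hg : sumR nS (fun y => P x0 a0 y * exp (g y)) <= 1).
  { apply (mgf nS (fun y => P x0 a0 y) (g0 nS nA P Rw x0 a0 m) c lam);
      [intros; apply HP0; auto | apply HP1; auto | | | lra | lra].
    - unfold g0. rewrite sumR_lsum.
      rewrite (lsum_ext _ _ (fun y => mu nS nA P Rw x0 a0 m * P x0 a0 y + - (P x0 a0 y * Vsb nS nA P Rw m y))) by (intros; ring).
      rewrite lsum_plus, lsum_opp, lsum_scal, <- !sumR_lsum, HP1 by auto. unfold mu. ring.
    - intros y Hy. unfold g0. destruct (Vsb_bounds nS nA P Rw HA HP0 HP1 HR m y Hy). lra. }
  set (X0 := lam * (INR n * b) - 2 * lam ^ 2 * c ^ 2 * INR n).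
  assert (HX0 : X0 = 49 * L ^ 2 / 8).
  { unfold X0, lam. rewrite Hbv, <- Hss. field. split; lra. }
  assert (Hsup := supB nS nA nH P start pick HP0 HP1 Hpick Hstart x0 a0 g Hg nK n 1 [] ltac:(lia)).
  simpl devb in Hsup. rewrite exp_0 in Hsup.
  eapply Rle_trans with (lsum (all_outcomes nK nH nS) (fun om => exp (- X0) *
     (pr om * exp (devb x0 a0 g (concat (ev om)) n)))).
  - apply lsum_le. intros om Hom.
    assert (Hp : 0 <= pr om) by (apply (run_nonneg nS nA nH P start pick HP0 Hpick Hstart nK); auto).
    assert (0 < exp (devb x0 a0 g (concat (ev om)) n)) by apply exp_pos.
    assert (0 < exp (- X0)) by apply exp_pos.
    destruct (classic (Btup (x0, a0, m, n) (ev om))) as [HB|HB].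
    + rewrite ind_1 by auto. destruct HB as [_ HB]. change (bval nS nA nH nK delta n) with b in HB.
      assert (Hlow := devb_lower x0 a0 (g0 nS nA P Rw x0 a0 m) lam (2 * lam ^ 2 * c ^ 2) (concat (ev om)) n
                     ltac:(nra)).
      fold g in Hlow.
      assert (lam * (INR n * b) <= lam * devb x0 a0 (g0 nS nA P Rw x0 a0 m) (concat (ev om)) n)
        by (apply Rmult_le_compat_l; lra).
      assert (X0 <= devb x0 a0 g (concat (ev om)) n) by (unfold X0; lra).
      assert (1 <= exp (- X0) * exp (devb x0 a0 g (concat (ev om)) n)).
      { rewrite <- exp_plus. rewrite <- exp_0. apply exp_le'. lra. }
      nra.
    + rewrite ind_0 by auto. assert (0 <= exp (- X0) * (pr om * exp (devb x0 a0 g (concat (ev om)) n))).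
      { apply Rmult_le_pos; [lra|]. apply Rmult_le_pos; lra. } lra.
  - rewrite lsum_scal. unfold pr, ev.
    assert (exp (- X0) <= exp (- (2 * L))).
    { apply exp_le'. rewrite HX0. nra. }
    assert (0 < exp (- X0)) by apply exp_pos.
    assert (0 <= lsum (all_outcomes nK nH nS) (fun om => snd (run P start pick 1 [] om) *
       exp (devb x0 a0 g (concat (fst (run P start pick 1 [] om))) n))).
    { apply lsum_nonneg. intros om Hom. apply Rmult_le_pos.
      apply (run_nonneg nS nA nH P start pick HP0 Hpick Hstart nK); auto. left; apply exp_pos. }
    nra.
Qed.

Lemma in_tuples x0 a0 m n : (x0 < nS)%nat -> (a0 < nA)%nat -> (m < nH)%nat -> (1 <= n <= nK * nH)%nat ->
  In (x0, a0, m, n) tuples.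
Proof.
  intros. unfold tuples. apply in_flat_map. exists x0. split. apply in_seq; lia.
  apply in_flat_map. exists a0. split. apply in_seq; lia.
  apply in_flat_map. exists m. split. apply in_seq; lia.
  apply in_map. apply in_seq. lia.
Qed.

Lemma tuples_inv t : In t tuples -> exists x0 a0 m n, t = (x0, a0, m, n) /\
  (x0 < nS)%nat /\ (a0 < nA)%nat /\ (m < nH)%nat /\ (1 <= n <= nK * nH)%nat.
Proof.
  unfold tuples. intros H.
  apply in_flat_map in H. destruct H as [x0 [Hx H]].
  apply in_flat_map in H. destruct H as [a0 [Ha H]].
  apply in_flat_map in H. destruct H as [m [Hm H]].
  apply in_map_iff in H. destruct H as [n [<- Hn]].
  apply in_seq in Hx, Ha, Hm, Hn. exists x0, a0, m, n. repeat split; lia.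
Qed.

Lemma length_tuples : length tuples = (nS * (nA * (nH * (nK * nH))))%nat.
Proof.
  unfold tuples. rewrite (length_flat_map_const _ _ (nA * (nH * (nK * nH)))), length_seq. reflexivity.
  intros x0. rewrite (length_flat_map_const _ _ (nH * (nK * nH))), length_seq. reflexivity.
  intros a0. rewrite (length_flat_map_const _ _ (nK * nH)), length_seq. reflexivity.
  intros m. rewrite length_map, length_seq. reflexivity.
Qed.

Lemma good_opt om : In om (all_outcomes nK nH nS) ->
  (forall t, In t tuples -> ~ Btup t (ev om)) -> optimism nS nA nH nK P Rw delta (ev om).
Proof.
  intros Hom Hnb. unfold ev in *.
  destruct (run_struct nS nH P start pick nK 1 [] om Hom) as [X [E [HX1 HX2]]].
  rewrite E in *. simpl app in *.
  assert (HD : forall t, In t (concat X) -> (snd t < nS)%nat).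
  { intros t Ht. apply in_concat in Ht. destruct Ht as [ep [Hep Ht]]. apply (HX2 ep Hep); auto. }
  assert (HLD : length (concat X) = (nK * nH)%nat).
  { rewrite (length_concat_const _ nH). unfold episode in *. rewrite HX1. reflexivity. intros; apply HX2; auto. }
  assert (HG : GoodD nS nA nH nK P Rw delta (concat X)).
  { intros x0 a0 m n Hx Ha Hm Hn Hb. apply Rnot_lt_le. intros Hlt.
    apply (Hnb (x0, a0, m, n)). apply in_tuples; auto. simpl. split; auto. }
  apply (opt_of_conc nS nA nH nK P Rw delta HA HP0 HP1 HR). intros k'.
  apply (conc_from_good nS nA nH nK P Rw delta HA HP0 HP1 HR (concat X) _ (concat (skipn k' X))); auto.
  unfold episode, trans in *; lia. rewrite <- concat_app, firstn_skipn. reflexivity.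
Qed.

Lemma ind_opt om : In om (all_outcomes nK nH nS) ->
  1 - lsum tuples (fun t => Defs.ind (Btup t (ev om))) <= Defs.ind (optimism nS nA nH nK P Rw delta (ev om)).
Proof.
  intros Hom.
  assert (Hi := ind_bounds (optimism nS nA nH nK P Rw delta (ev om))).
  destruct (classic (exists t, In t tuples /\ Btup t (ev om))) as [[t [Ht HB]]|Hn].
  - assert (1 <= lsum tuples (fun t => Defs.ind (Btup t (ev om)))).
    { rewrite <- (ind_1 _ HB). apply (lsum_In_le tuples (fun t => Defs.ind (Btup t (ev om)))); auto.
      intros; apply ind_bounds. }
    lra.
  - rewrite ind_1. assert (0 <= lsum tuples (fun t => Defs.ind (Btup t (ev om)))).
    { apply lsum_nonneg. intros; apply ind_bounds. } lra.
    apply good_opt; auto. intros t Ht HB. apply Hn. eauto.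
Qed.

Lemma final_arith : exp (- (2 * Lp nS nA nH nK delta)) * INR (length tuples) <= delta.
Proof.
  rewrite length_tuples. unfold Lp, Ttot.
  set (s := INR nS). set (a := INR nA). set (h := INR nH). set (t := INR (nK * nH)).
  assert (Hs : 1 <= s) by (apply (le_INR 1); lia).
  assert (Ha : 1 <= a) by (apply (le_INR 1); lia).
  assert (Hh : 1 <= h) by (apply (le_INR 1); lia).
  assert (Hht : h <= t) by (apply le_INR; nia).
  assert (Hid : 1 < / delta) by (rewrite <- Rinv_1; apply Rinv_lt_contravar; lra).
  set (w := s * a * t).
  assert (Hw1 : t <= w) by (unfold w; assert (1 <= s * a) by nra; nra).
  set (u := 5 * s * a * t / delta).
  assert (Hu : u = 5 * w / delta) by (unfold u, w; field; lra).
  assert (Hu0 : 0 < u) by (rewrite Hu; unfold Rdiv; apply Rmult_lt_0_compat; nra).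
  replace (- (2 * ln u)) with (- (ln u + ln u)) by ring.
  rewrite exp_Ropp, exp_plus, exp_ln by auto.
  replace (INR (nS * (nA * (nH * (nK * nH))))) with (s * (a * (h * t)))
    by (unfold s, a, h, t; rewrite !mult_INR; ring).
  assert (Hx : s * (a * (h * t)) <= w * w).
  { assert (Hsa : 0 <= s * a) by nra.
    assert (E1 : s * a * h <= s * a * t) by (apply Rmult_le_compat_l; lra).
    assert (E2 : s * a * h * t <= s * a * t * t) by (apply Rmult_le_compat_r; lra).
    assert (E3 : s * a * t * t <= s * a * t * w) by (apply Rmult_le_compat_l; [nra | exact Hw1]).
    replace (s * (a * (h * t))) with (s * a * h * t) by ring. unfold w in *. lra. }
  assert (Hy : w * w <= delta * (u * u)).
  { rewrite Hu. replace (delta * (5 * w / delta * (5 * w / delta))) with (25 * (w * w) * / delta) by (field; lra).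
    assert (0 <= w * w) by nra. nra. }
  assert (0 < u * u) by nra.
  apply (Rmult_le_reg_l (u * u)); auto. rewrite <- Rmult_assoc, Rinv_r by lra. nra.
Qed.

Lemma main_core : prob_optimism nS nA nH nK P Rw delta start pick >= 1 - delta.
Proof.
  rewrite prob_eq. apply Rle_ge. fold pr ev.
  set (O := all_outcomes nK nH nS).
  set (B := fun t om => Defs.ind (Btup t (ev om))).
  eapply Rle_trans with (lsum O (fun om => pr om * (1 - lsum tuples (fun t => B t om)))).
  2:{ apply lsum_le. intros om Hom. apply Rmult_le_compat_l.
      apply (run_nonneg nS nA nH P start pick HP0 Hpick Hstart nK); auto.
      apply ind_opt; auto. }
  assert (Ecomm : lsum O (fun om => lsum tuples (fun t => pr om * B t om)) =
                  lsum tuples (fun t => lsum O (fun om => pr om * B t om)))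
    by apply (lsum_comm O tuples (fun om t => pr om * B t om)).
  assert (Eq : lsum O (fun om => pr om * (1 - lsum tuples (fun t => B t om))) =
               lsum O pr - lsum tuples (fun t => lsum O (fun om => pr om * B t om))).
  { rewrite <- Ecomm. unfold Rminus. rewrite <- lsum_opp, <- lsum_plus. apply lsum_ext.
    intros om _. rewrite (lsum_scal tuples (pr om) (fun t => B t om)). ring. }
  rewrite Eq.
  assert (Hm : lsum O pr = 1) by (apply (massB nS nA nH P start pick HP1 Hpick Hstart nK 1 []); lia).
  rewrite Hm.
  assert (lsum tuples (fun t => lsum O (fun om => pr om * B t om)) <=
          lsum tuples (fun _ => exp (- (2 * Lp nS nA nH nK delta)))).
  { apply lsum_le. intros t Ht. destruct (tuples_inv t Ht) as [x0 [a0 [m [n [-> [Hx [Ha [Hm' Hn]]]]]]]].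
    apply tuple_bound; auto. lia. }
  rewrite lsum_const in H. assert (Hf := final_arith). lra.
Qed.
End Main.

Theorem mainTheorem3 (nS nA nH nK : nat) (P : nat -> nat -> nat -> R)
    (Rw : nat -> nat -> R) (delta : R)
    (start : nat -> list episode -> nat)
    (pick : nat -> nat -> nat -> list episode -> nat) :
  (0 < nS)%nat -> (0 < nA)%nat -> (0 < nH)%nat ->
  (forall x a y, (x < nS)%nat -> (a < nA)%nat -> (y < nS)%nat -> 0 <= P x a y) ->
  (forall x a, (x < nS)%nat -> (a < nA)%nat -> sumR nS (fun y => P x a y) = 1) ->
  (forall x a, (x < nS)%nat -> (a < nA)%nat -> 0 <= Rw x a <= 1) ->
  (forall k eps, (start k eps < nS)%nat) ->
  greedy nS nA nH nK Rw delta pick ->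
  0 < delta ->
  prob_optimism nS nA nH nK P Rw delta start pick >= 1 - delta.
Proof.
  intros HS HA HH HP0 HP1 HR Hst Hgr Hd.
  assert (Hpick : forall k h x eps, (1 <= k)%nat -> (1 <= h <= nH)%nat -> (x < nS)%nat ->
    (pick k h x eps < nA)%nat) by (intros k h x eps Hk Hh Hx; exact (proj1 (Hgr k h x eps Hk Hh Hx))).
  destruct (Rle_or_lt 1 delta) as [Hd1|Hd1].
  - rewrite prob_eq. apply Rle_ge. eapply Rle_trans with 0. lra.
    apply lsum_nonneg. intros om Hom. apply Rmult_le_pos.
    apply (run_nonneg nS nA nH P start pick HP0 Hpick Hst nK); auto.
    apply ind_bounds.
  - destruct nK as [|nK'].
    + rewrite prob_eq. simpl all_outcomes. rewrite lsum_cons, lsum_nil. simpl run.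
      rewrite ind_1. simpl. lra. intros k h x Hk. lia.
    + apply main_core; auto. lia.
Qed.
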